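(* For every precubical set $X$, the stream realization $\vec{|X|}$ is path-ordered.
   Context: Streams: a circulation on a space $X$ assigns to each open $V\subset X$ a preorder $\leqslant_V$ such that for every collection $\mathcal{O}$ of open sets, $\leqslant_{\bigcup\mathcal{O}}$ is the preorder with smallest graph containing $\bigcup_{V\in\mathcal{O}}\mathrm{graph}(\leqslant_V)$; a stream is a space with a circulation; a stream map $f:X\to Y$ is continuous with $f(x)\leqslant_V f(y)$ whenever $x\leqslant_{f^{-1}V}y$. Streams form a cocomplete category, colimits being computed on underlying spaces with the final circulation. $\vec\square[1]$ is $[0,1]$ with circulation $x\leqslant_V y$ iff $x\le y$ and $[x,y]\subset V$; a dipath on $X$ is a stream map $\vec\square[1]\to X$. $X$ is path-ordered if whenever $V\subset X$ is open and $x\leqslant_V y$ there is a dipath from $x$ to $y$ with image in $V$. $\square$ is the smallest subcategory of posets and monotone maps closed under cartesian products (unit $\{0\}$) containing $\delta_\pm:\{0\}\to\{0<1\}$; a precubical set is a functor $X:\square^{op}\to\mathbf{Set}$, $X_n=X([1]^n)$. $\vec\square[n]$ is the $n$-fold product of $\vec\square[1]$ in streams, $\square$-morphisms extend linearly to stream maps, and the stream realization is the coend $\vec{|X|}=\int^{[1]^n}X_n\cdot\vec\square[n]$ in streams. *)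

(* Defs.v *)
From Stdlib Require Import Reals.
From mathcomp Require Import all_boot.

Set Implicit Arguments.
Unset Strict Implicit.
Unset Printing Implicit Defensive.

(* A (pre)stream: a carrier with a family of "open" subsets and, for each
   subset V, a relation circ V (only meaningful for open V). The axioms are
   collected in the predicate [is_stream] below. *)
Record stream := Stream {
  carrier :> Type;
  isopen : (carrier -> Prop) -> Prop;
  circ : (carrier -> Prop) -> carrier -> carrier -> Prop }.
Arguments isopen : clear implicits.
Arguments circ : clear implicits.

Definition bigunion (T : Type) (O : (T -> Prop) -> Prop) : T -> Prop :=
  fun x => exists V, O V /\ V x.

Definition is_topology (X : stream) : Prop :=
  isopen X (fun _ => True) /\
  (forall O : (X -> Prop) -> Prop,
      (forall V, O V -> isopen X V) -> isopen X (bigunion O)) /\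
  (forall U V, isopen X U -> isopen X V -> isopen X (fun x => U x /\ V x)).

Definition preorder_on (T : Type) (W : T -> Prop) (r : T -> T -> Prop) : Prop :=
  (forall x y, r x y -> W x /\ W y) /\
  (forall x, W x -> r x x) /\
  (forall x y z, r x y -> r y z -> r x z).

(* the preorder on W with smallest graph containing rl (rl has graph in W x W) *)
Inductive pclos (T : Type) (W : T -> Prop) (rl : T -> T -> Prop) : T -> T -> Prop :=
| pclos_refl x : W x -> pclos W rl x x
| pclos_step x y : rl x y -> pclos W rl x y
| pclos_trans x y z : pclos W rl x y -> pclos W rl y z -> pclos W rl x z.

Definition is_circulation (X : stream) : Prop :=
  (forall V, isopen X V -> preorder_on V (circ X V)) /\
  (forall O : (X -> Prop) -> Prop, (forall V, O V -> isopen X V) ->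
     forall x y, circ X (bigunion O) x y <->
       pclos (bigunion O) (fun a b => exists V, O V /\ circ X V a b) x y).

Definition is_stream (X : stream) : Prop := is_topology X /\ is_circulation X.

Definition is_stream_map (X Y : stream) (f : X -> Y) : Prop :=
  (forall V, isopen Y V -> isopen X (fun x => V (f x))) /\
  (forall V, isopen Y V -> forall x y,
      circ X (fun z => V (f z)) x y -> circ Y V (f x) (f y)).

Definition unit_interval : Type := {t : R | Rle R0 t /\ Rle t R1}.

Definition vI1 : stream :=
  @Stream unit_interval
    (fun U => exists W : R -> Prop, open_set W /\
                forall t : unit_interval, U t <-> W (proj1_sig t))
    (fun V x y => Rle (proj1_sig x) (proj1_sig y) /\
        forall z : unit_interval,
          Rle (proj1_sig x) (proj1_sig z) -> Rle (proj1_sig z) (proj1_sig y) -> V z).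

Lemma i0_proof : Rle R0 R0 /\ Rle R0 R1.
Proof. split; [apply Rle_refl | apply Rlt_le, Rlt_0_1]. Qed.
Lemma i1_proof : Rle R0 R1 /\ Rle R1 R1.
Proof. split; [apply Rlt_le, Rlt_0_1 | apply Rle_refl]. Qed.
Definition i0 : vI1 := (exist (fun t => Rle R0 t /\ Rle t R1) R0 i0_proof : unit_interval).
Definition i1 : vI1 := (exist (fun t => Rle R0 t /\ Rle t R1) R1 i1_proof : unit_interval).

Definition dipath (X : stream) (g : vI1 -> X) : Prop := is_stream_map g.

Definition path_ordered (X : stream) : Prop :=
  forall V, isopen X V -> forall x y, circ X V x y ->
    exists g : vI1 -> X, dipath g /\ g i0 = x /\ g i1 = y /\ forall t, V (g t).

(* the poset [1]^n = {0<1}^n, points as boolean functions on 'I_n *)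
Definition bcube (n : nat) := {ffun 'I_n -> bool}.

Definition delta (b : bool) : bcube 0 -> bcube 1 := fun _ => [ffun _ => b].

(* cartesian product of maps, identifying [1]^a x [1]^c with [1]^(a+c) *)
Definition prod_map (a b c d : nat) (f : bcube a -> bcube b) (g : bcube c -> bcube d)
  : bcube (a + c) -> bcube (b + d) :=
  fun p => [ffun i : 'I_(b + d) =>
    match split i with
    | inl j => f [ffun j' => p (lshift c j')] j
    | inr k => g [ffun k' => p (rshift a k')] k
    end].

(* morphisms of the box category: smallest subcategory (of posets) containing
   delta_-, delta_+ and closed under cartesian products; morphisms are
   functions, so closed under extensional equality *)
Inductive box_mor : forall m n : nat, (bcube m -> bcube n) -> Prop :=
| box_id n : box_mor (fun p : bcube n => p)
| box_comp l m n (f : bcube l -> bcube m) (g : bcube m -> bcube n) :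
    box_mor f -> box_mor g -> box_mor (fun p => g (f p))
| box_delta b : box_mor (delta b)
| box_prod a b c d (f : bcube a -> bcube b) (g : bcube c -> bcube d) :
    box_mor f -> box_mor g -> box_mor (prod_map f g)
| box_ext m n (f g : bcube m -> bcube n) : box_mor f -> f =1 g -> box_mor g.

(* precubical set: functor box^op -> Set *)
Record precubical := Precubical {
  pc_set :> nat -> Type;
  pc_act : forall m n (f : bcube m -> bcube n), box_mor f -> pc_set n -> pc_set m;
  pc_act_ext : forall m n (f g : bcube m -> bcube n) (hf : box_mor f) (hg : box_mor g),
      f =1 g -> forall x, pc_act hf x = pc_act hg x;
  pc_act_id : forall n (h : box_mor (fun p : bcube n => p)) x, pc_act h x = x;
  pc_act_comp : forall l m n (f : bcube l -> bcube m) (g : bcube m -> bcube n)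
      (hf : box_mor f) (hg : box_mor g) (hgf : box_mor (fun p => g (f p))) x,
      pc_act hgf x = pc_act hf (pc_act hg x) }.

Definition rsum (T : finType) (F : T -> R) : R :=
  foldr (fun x acc => Rplus (F x) acc) R0 (enum T).
Definition rprod (T : finType) (F : T -> R) : R :=
  foldr (fun x acc => Rmult (F x) acc) R1 (enum T).

(* (multi)linear extension of f : {0,1}^m -> {0,1}^n to [0,1]^m -> [0,1]^n,
   coordinate k at the point t *)
Definition linext (m n : nat) (f : bcube m -> bcube n) (t : 'I_m -> R) (k : 'I_n) : R :=
  rsum (fun v : bcube m =>
    Rmult (rprod (fun j : 'I_m => if v j then t j else Rminus R1 (t j)))
          (if f v k then R1 else R0)).

Definition is_product_vI1 (n : nat) (P : stream) (pr : 'I_n -> P -> vI1) : Prop :=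
  (forall i, is_stream_map (pr i)) /\
  forall Z : stream, is_stream Z ->
  forall h : 'I_n -> Z -> vI1, (forall i, is_stream_map (h i)) ->
    (exists u : Z -> P, is_stream_map u /\ forall i z, pr i (u z) = h i z) /\
    (forall u u' : Z -> P, is_stream_map u -> is_stream_map u' ->
       (forall i z, pr i (u z) = h i z) -> (forall i z, pr i (u' z) = h i z) ->
       forall z, u z = u' z).

Definition linear_cube_maps (Cube : nat -> stream) (pr : forall n, 'I_n -> Cube n -> vI1)
  (cmap : forall m n (f : bcube m -> bcube n), box_mor f -> Cube m -> Cube n) : Prop :=
  forall m n (f : bcube m -> bcube n) (hf : box_mor f),
    is_stream_map (cmap m n f hf) /\
    forall t k, proj1_sig (pr n k (cmap m n f hf t)) =
                linext f (fun j => proj1_sig (pr m j t)) k.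

(* a wedge (cocone) from the functor ([1]^m,[1]^n) |-> X_m . \vec\square[n]
   to Y: for each m and x in X_m a stream map j m x : \vec\square[m] -> Y *)
Definition is_wedge (X : precubical) (Cube : nat -> stream)
  (cmap : forall m n (f : bcube m -> bcube n), box_mor f -> Cube m -> Cube n)
  (Y : stream) (j : forall m, X m -> Cube m -> Y) : Prop :=
  (forall m x, is_stream_map (j m x)) /\
  forall m n (f : bcube m -> bcube n) (hf : box_mor f) (x : X n) (t : Cube m),
    j n x (cmap m n f hf t) = j m (pc_act hf x) t.

(* (Y, iota) is the coend  \int^{[1]^n} X_n . \vec\square[n]  in streams *)
Definition is_coend (X : precubical) (Cube : nat -> stream)
  (cmap : forall m n (f : bcube m -> bcube n), box_mor f -> Cube m -> Cube n)
  (Y : stream) (iota : forall m, X m -> Cube m -> Y) : Prop :=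
  is_wedge cmap iota /\
  forall Z : stream, is_stream Z ->
  forall j : forall m, X m -> Cube m -> Z, is_wedge cmap j ->
    (exists u : Y -> Z, is_stream_map u /\ forall m x t, u (iota m x t) = j m x t) /\
    (forall u u' : Y -> Z, is_stream_map u -> is_stream_map u' ->
       (forall m x t, u (iota m x t) = j m x t) ->
       (forall m x t, u' (iota m x t) = j m x t) ->
       forall y, u y = u' y).

(* Main.v *)
Require Import Defs.
From Stdlib Require Import Reals Lra.
From mathcomp Require Import all_boot.
From Stdlib Require Import Classical FunctionalExtensionality PropExtensionality ProofIrrelevance.
Open Scope R_scope.

Lemma open_ball (W : R -> Prop) z : open_set W -> W z ->
  exists d, 0 < d /\ forall r, Rabs (r - z) < d -> W r.
Proof.
intros HW Hz. destruct (HW z Hz) as [[d Hd] Hin].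
exists d. split; [exact Hd|]. intros r Hr. apply Hin. exact Hr.
Qed.

Lemma make_open (W : R -> Prop) :
  (forall z, W z -> exists d, 0 < d /\ forall r, Rabs (r - z) < d -> W r) -> open_set W.
Proof.
intros H z Hz. destruct (H z Hz) as [d [Hd Hin]].
exists (mkposreal d Hd). intros r Hr. apply Hin. exact Hr.
Qed.

Lemma chain (a b : R) (Q : R -> Prop) :
  a <= b -> Q a ->
  (forall z, a <= z <= b -> exists d, 0 < d /\ forall s t, a <= s -> s <= t -> t <= b ->
       z - d < s -> t < z + d -> Q s -> Q t) -> Q b.
Proof.
intros Hab Qa Hloc.
set (E := fun r => a <= r <= b /\ Q r).
assert (HB : bound E) by (exists b; intros r [[_ H] _]; exact H).
assert (HE : exists x, E x) by (exists a; split; [lra|exact Qa]).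
destruct (completeness E HB HE) as [m [Hub Hlub]].
assert (Ham : a <= m) by (apply Hub; split; [lra|exact Qa]).
assert (Hmb : m <= b) by (apply Hlub; intros r [[_ H] _]; exact H).
destruct (Hloc m (conj Ham Hmb)) as [d [Hd Hl]].
assert (Hr : exists r, E r /\ m - d < r).
{ apply NNPP. intro Hn. assert (m <= m - d); [|lra].
  apply Hlub. intros r Er. apply Rnot_lt_le. intro Hlt. apply Hn. exists r. auto. }
destruct Hr as [r [[[Har Hrb] Qr] Hrm]].
assert (Hrm' : r <= m) by (apply Hub; split; [lra|exact Qr]).
destruct (Rle_dec (m + d/2) b) as [Hle|Hgt].
- assert (Qt : Q (m + d/2)) by (apply (Hl r); try lra; exact Qr).
  assert (m + d/2 <= m); [|lra]. apply Hub. split; [lra|exact Qt].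
- apply (Hl r); try lra; exact Qr.
Qed.

Lemma ui_eq (s t : unit_interval) : proj1_sig s = proj1_sig t -> s = t.
Proof.
destruct s as [s Hs], t as [t Ht]; simpl; intros ->.
f_equal; apply proof_irrelevance.
Qed.

Definition clv (r : R) : R := Rmax 0 (Rmin r 1).
Lemma clv_range r : 0 <= clv r <= 1.
Proof. unfold clv, Rmax, Rmin. destruct (Rle_dec r 1); destruct (Rle_dec 0 _); lra. Qed.
Lemma clv_id r : 0 <= r <= 1 -> clv r = r.
Proof. intros H. unfold clv, Rmax, Rmin. destruct (Rle_dec r 1); destruct (Rle_dec 0 _); lra. Qed.
Definition cl (r : R) : unit_interval := exist _ (clv r) (clv_range r).

Definition lin (a b : R) (t : vI1) : vI1 := cl (a + proj1_sig t * (b - a)).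

Ltac dle := repeat match goal with
  | |- context [Rle_dec ?a ?b] => destruct (Rle_dec a b)
  | H : context [Rle_dec ?a ?b] |- _ => destruct (Rle_dec a b)
  end.
Ltac dabs := repeat match goal with
  | |- context [Rcase_abs ?a] => destruct (Rcase_abs a)
  end.

Lemma clv_lip x y : Rabs (clv x - clv y) <= Rabs (x - y).
Proof.
unfold clv, Rmax, Rmin.
dle; unfold Rabs; dabs; lra.
Qed.

Lemma clv_mono x y : x <= y -> clv x <= clv y.
Proof.
unfold clv, Rmax, Rmin. intros.
dle; lra.
Qed.

Lemma vI1_open_aff (U : vI1 -> Prop) a b : isopen vI1 U ->
  isopen vI1 (fun t => U (lin a b t)).
Proof.
intros [W [HW HU]].
exists (fun r => W (clv (a + r * (b - a)))). split.
- apply make_open. intros z Hz.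
  destruct (open_ball _ _ HW Hz) as [d [Hd Hin]].
  exists (d / (Rabs (b - a) + 1)). split.
  + apply Rdiv_lt_0_compat; [lra|]. pose proof (Rabs_pos (b-a)); lra.
  + intros r Hr. apply Hin.
    eapply Rle_lt_trans; [apply clv_lip|].
    replace (a + r * (b - a) - (a + z * (b - a))) with ((r - z) * (b - a)) by ring.
    rewrite Rabs_mult.
    pose proof (Rabs_pos (b-a)). pose proof (Rabs_pos (r - z)).
    assert (Hr' : Rabs (r - z) * (Rabs (b - a) + 1) < d).
    { apply (Rmult_lt_compat_r (Rabs (b - a) + 1)) in Hr; [|lra].
      unfold Rdiv in Hr. rewrite Rmult_assoc Rinv_l in Hr; lra. }
    nra.
- intros t. unfold lin, cl. simpl. apply HU.
Qed.

Lemma lin_val a b t : proj1_sig (lin a b t) = clv (a + proj1_sig t * (b - a)).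
Proof. reflexivity. Qed.

Lemma lin_circ a b (V : vI1 -> Prop) s t : a <= b ->
  circ vI1 (fun z => V (lin a b z)) s t -> circ vI1 V (lin a b s) (lin a b t).
Proof.
intros Hab [Hst Hin]. simpl in *. split.
- change (clv (a + proj1_sig s * (b - a)) <= clv (a + proj1_sig t * (b - a))). apply clv_mono. nra.
- intros z H1 H2. change (clv (a + proj1_sig s * (b - a)) <= proj1_sig z) in H1. change (proj1_sig z <= clv (a + proj1_sig t * (b - a))) in H2.
  destruct (Req_dec (proj1_sig z) (clv (a + proj1_sig s * (b - a)))) as [He|Hne].
  + assert (E : lin a b s = z) by (apply ui_eq; symmetry; exact He).
    rewrite <- E. apply Hin; lra.
  + assert (Hlt : clv (a + proj1_sig s * (b - a)) < proj1_sig z) by lra.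
    destruct z as [zv Hz]. simpl in *.
    assert (Hba : a < b).
    { destruct (Req_dec a b) as [E|E]; [|lra]. subst b.
      replace (a + proj1_sig s * (a - a)) with (a + proj1_sig t * (a - a)) in Hlt by ring. lra. }
    set (w0 := (zv - a) / (b - a)).
    assert (Hw : w0 * (b - a) = zv - a) by (unfold w0; field; lra).
    assert (Hvs : a + proj1_sig s * (b - a) < zv).
    { revert Hlt. unfold clv, Rmax, Rmin. dle; lra. }
    assert (Hvt : zv <= a + proj1_sig t * (b - a)).
    { revert H2 Hlt. pose proof (clv_range (a + proj1_sig s * (b - a))).
      unfold clv, Rmax, Rmin in *. dle; lra. }
    assert (Hsw : proj1_sig s < w0) by nra.
    assert (Hwt : w0 <= proj1_sig t) by nra.
    destruct s as [sv Hs]; destruct t as [tv Ht]; simpl in *.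
    assert (Hw01 : 0 <= w0 <= 1) by lra.
    set (wu := exist (fun r => 0 <= r <= 1) w0 Hw01 : unit_interval).
    assert (E : lin a b wu = exist _ zv Hz).
    { apply ui_eq. change (clv (a + w0 * (b - a)) = zv). rewrite clv_id; lra. }
    rewrite <- E. apply Hin; simpl; lra.
Qed.

Lemma lin_stream a b : a <= b -> is_stream_map (X:=vI1) (Y:=vI1) (lin a b).
Proof.
intros Hab. split.
- intros V HV. apply vI1_open_aff. exact HV.
- intros V _ x y H. apply lin_circ; auto.
Qed.

Lemma pred_ext (T : Type) (V V' : T -> Prop) : (forall x, V x <-> V' x) -> V = V'.
Proof. intros H. apply functional_extensionality. intros x. apply propositional_extensionality. apply H. Qed.

Lemma vI1_topology : is_topology vI1.
Proof.
split; [|split].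
- exists (fun _ => True). split; [|tauto]. apply make_open. intros z _. exists 1. split; [lra|auto].
- intros O HO.
  exists (fun r => exists V, O V /\ exists W, open_set W /\ (forall t : unit_interval, V t <-> W (proj1_sig t)) /\ W r).
  split.
  + apply make_open. intros z [V [OV [W [HW [HVW Wz]]]]].
    destruct (open_ball _ _ HW Wz) as [d [Hd Hin]]. exists d. split; [exact Hd|].
    intros r Hr. exists V. split; [exact OV|]. exists W. auto.
  + intros t. split.
    * intros [V [OV Vt]]. destruct (HO V OV) as [W [HW HVW]].
      exists V. split; [exact OV|]. exists W. split; [exact HW|]. split; [exact HVW|]. apply HVW; exact Vt.
    * intros [V [OV [W [HW [HVW Wt]]]]]. exists V. split; [exact OV|]. apply HVW; exact Wt.
- intros U V [W1 [HW1 H1]] [W2 [HW2 H2]].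
  exists (fun r => W1 r /\ W2 r). split.
  + apply make_open. intros z [Hz1 Hz2].
    destruct (open_ball _ _ HW1 Hz1) as [d1 [Hd1 Hin1]].
    destruct (open_ball _ _ HW2 Hz2) as [d2 [Hd2 Hin2]].
    exists (Rmin d1 d2). split; [apply Rmin_glb_lt; auto|].
    intros r Hr. split; [apply Hin1|apply Hin2];
      eapply Rlt_le_trans; [exact Hr| apply Rmin_l | exact Hr | apply Rmin_r].
  + intros t. rewrite (H1 t) (H2 t). tauto.
Qed.

Lemma vI1_preorder (V : vI1 -> Prop) : preorder_on V (circ vI1 V).
Proof.
split; [|split].
- intros x y [Hxy Hin]. split; apply Hin; lra.
- intros x Vx. split; [lra|]. intros z H1 H2.
  assert (z = x) by (apply ui_eq; lra). subst; exact Vx.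
- intros x y z [Hxy Hin1] [Hyz Hin2]. split; [lra|].
  intros w H1 H2. destruct (Rle_dec (proj1_sig w) (proj1_sig y)).
  + apply Hin1; lra.
  + apply Hin2; lra.
Qed.

Lemma pclos_ends (T : Type) (W : T -> Prop) (R : T -> T -> Prop) x y :
  (forall a b, R a b -> W a /\ W b) -> pclos W R x y -> W x /\ W y.
Proof.
intros HR H. induction H as [x Wx|x y Hr|x y z _ [I1 _] _ [_ I2]]; auto.
Qed.

Lemma mk_ui (r : R) : 0 <= r <= 1 -> {t : unit_interval | proj1_sig t = r}.
Proof. intros H. exists (exist _ r H). reflexivity. Qed.

Lemma vI1_stream : is_stream vI1.
Proof.
split; [exact vI1_topology|]. split.
- intros V _. apply vI1_preorder.
- intros O HO x y. split.
  + intros [Hxy Hin].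
    set (Q := fun r => forall t : unit_interval, proj1_sig t = r ->
       pclos (bigunion O) (fun a b => exists V, O V /\ circ vI1 V a b) x t).
    assert (HQ : Q (proj1_sig y)).
    { apply (chain (proj1_sig x) (proj1_sig y) Q Hxy).
      - intros t Ht. assert (t = x) by (apply ui_eq; exact Ht). subst t.
        apply pclos_refl. apply Hin; lra.
      - intros z Hz. destruct x as [xv Hx]; destruct y as [yv Hy]; simpl in *.
        assert (Hz01 : 0 <= z <= 1) by lra.
        destruct (Hin (exist _ z Hz01)) as [V [OV Vz]]; simpl; try lra.
        destruct (HO V OV) as [W [HW HVW]].
        destruct (open_ball _ _ HW (proj1 (HVW _) Vz)) as [d [Hd Hball]].
        exists d. split; [exact Hd|].
        intros s t Hs Hst Ht Hs' Ht' Qs t' Ht'v.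
        assert (Hs01 : 0 <= s <= 1) by lra.
        apply pclos_trans with (exist _ s Hs01).
        + apply Qs. reflexivity.
        + apply pclos_step. exists V. split; [exact OV|]. split; simpl; [lra|].
          intros w H1 H2. simpl in H1, H2. apply HVW. apply Hball. simpl. rewrite Ht'v in H2. unfold Rabs; destruct (Rcase_abs _); lra. }
    apply HQ. reflexivity.
  + intros H. induction H as [a Wa|a b [V [OV [Hab Hin]]]|a b c _ IH1 _ IH2].
    * apply vI1_preorder; exact Wa.
    * split; [exact Hab|]. intros z H1 H2. exists V. split; [exact OV|]. apply Hin; auto.
    * eapply (proj2 (proj2 (vI1_preorder _))); eauto.
Qed.

Set Implicit Arguments.
Unset Strict Implicit.

Lemma comp_sm (X Y Z : stream) (f : X -> Y) (g : Y -> Z) :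
  is_stream_map f -> is_stream_map g -> is_stream_map (fun x => g (f x)).
Proof.
intros [Hf1 Hf2] [Hg1 Hg2]. split.
- intros V HV. exact (Hf1 _ (Hg1 V HV)).
- intros V HV x y H. apply (Hg2 V HV). apply (Hf2 _ (Hg1 V HV)). exact H.
Qed.

Lemma open_const (P : Prop) : isopen vI1 (fun _ => P).
Proof.
exists (fun _ => P). split; [|tauto]. apply make_open. intros z Hz. exists 1. split; [lra|auto].
Qed.

Lemma const_dipath (S : stream) (x : S) : is_stream S -> dipath (fun _ : vI1 => x).
Proof.
intros HS. split.
- intros V _. apply open_const.
- intros V HV s t [Hst Hin]. assert (Vx : V x) by (apply (Hin s); lra).
  apply (proj1 (proj2 (proj1 (proj2 HS) V HV))). exact Vx.
Qed.

Definition pcat (S : stream) (g1 g2 : vI1 -> S) (t : vI1) : S :=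
  if Rle_dec (proj1_sig t) (1/2) then g1 (lin 0 2 t) else g2 (lin (-1) 1 t).

Arguments pcat {S}.
Lemma clv_eq r s : r = s -> 0 <= s <= 1 -> clv r = s.
Proof. intros -> H. apply clv_id. exact H. Qed.
Lemma cat_1 (S : stream) (g1 g2 : vI1 -> S) t : proj1_sig t <= 1/2 -> pcat g1 g2 t = g1 (lin 0 2 t).
Proof. intros H. unfold pcat. destruct (Rle_dec _ _); [reflexivity|lra]. Qed.

Lemma lin_eq a b t r : clv (a + proj1_sig t * (b - a)) = r -> forall H, lin a b t = exist _ r H.
Proof. intros E H. apply ui_eq. exact E. Qed.

Lemma cat_2 (S : stream) (g1 g2 : vI1 -> S) t : g1 i1 = g2 i0 ->
  1/2 <= proj1_sig t -> pcat g1 g2 t = g2 (lin (-1) 1 t).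
Proof.
intros J H. unfold pcat. destruct (Rle_dec _ _) as [H'|H']; [|reflexivity].
assert (E : proj1_sig t = 1/2) by lra.
assert (E1 : lin 0 2 t = i1). { apply ui_eq. simpl. rewrite E. apply clv_eq; simpl; lra. }
assert (E2 : lin (-1) 1 t = i0). { apply ui_eq. simpl. rewrite E. apply clv_eq; simpl; lra. }
rewrite E1 E2. exact J.
Qed.

Lemma cat_dipath (S : stream) (g1 g2 : vI1 -> S) : is_stream S ->
  dipath g1 -> dipath g2 -> g1 i1 = g2 i0 -> dipath (pcat g1 g2).
Proof.
intros HS Hg1 Hg2 J.
pose proof (comp_sm (lin_stream 0 2 ltac:(lra)) Hg1) as Hh1.
pose proof (comp_sm (lin_stream (-1) 1 ltac:(lra)) Hg2) as Hh2.
split.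
- intros U HU.
  destruct (proj1 Hh1 U HU) as [W1 [HW1 E1]].
  destruct (proj1 Hh2 U HU) as [W2 [HW2 E2]].
  exists (fun r => (r < 1/2 /\ W1 r) \/ (r > 1/2 /\ W2 r) \/ (W1 r /\ W2 r)). split.
  + apply make_open. intros z [[Hz Wz]|[[Hz Wz]|[Wz1 Wz2]]].
    * destruct (open_ball _ _ HW1 Wz) as [d [Hd Hin]].
      exists (Rmin d (1/2 - z)). split; [apply Rmin_glb_lt; lra|].
      intros r Hr. pose proof (Rmin_l d (1/2 - z)). pose proof (Rmin_r d (1/2 - z)).
      left. split; [|apply Hin; lra]. revert Hr; unfold Rabs; destruct (Rcase_abs _); lra.
    * destruct (open_ball _ _ HW2 Wz) as [d [Hd Hin]].
      exists (Rmin d (z - 1/2)). split; [apply Rmin_glb_lt; lra|].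
      intros r Hr. pose proof (Rmin_l d (z - 1/2)). pose proof (Rmin_r d (z - 1/2)).
      right; left. split; [|apply Hin; lra]. revert Hr; unfold Rabs; destruct (Rcase_abs _); lra.
    * destruct (open_ball _ _ HW1 Wz1) as [d1 [Hd1 Hin1]].
      destruct (open_ball _ _ HW2 Wz2) as [d2 [Hd2 Hin2]].
      exists (Rmin d1 d2). split; [apply Rmin_glb_lt; lra|].
      intros r Hr. pose proof (Rmin_l d1 d2). pose proof (Rmin_r d1 d2).
      right; right. split; [apply Hin1|apply Hin2]; lra.
  + intros t. simpl in E1, E2.
    destruct (Rlt_le_dec (proj1_sig t) (1/2)) as [Hlt|Hge].
    * rewrite cat_1; [|lra]. rewrite E1. split; [intros; left; auto|].
      intros [[_ H]|[[H _]|[H _]]]; auto; lra.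
    * rewrite cat_2; auto. rewrite E2.
      destruct (Req_dec (proj1_sig t) (1/2)) as [Heq|Hne].
      -- assert (HH : W1 (proj1_sig t) <-> W2 (proj1_sig t)).
         { pose proof (E1 t) as A1. pose proof (E2 t) as A2.
           rewrite <- (@cat_1 S g1 g2 t) in A1; [|lra]. rewrite <- (@cat_2 S g1 g2 t J) in A2; [|lra]. tauto. }
         split; [intros; right; right; tauto|].
         intros [[H1 _]|[[_ H3]|[_ H3]]]; [lra|exact H3|exact H3].
      -- split; [intros; right; left; split; auto; lra|].
         intros [[H1 _]|[[_ H3]|[_ H3]]]; [lra|exact H3|exact H3].
- intros V HV.
  assert (P1 : forall s t, proj1_sig t <= 1/2 ->
            circ vI1 (fun z => V (pcat g1 g2 z)) s t -> circ S V (pcat g1 g2 s) (pcat g1 g2 t)).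
  { intros s t Ht [Hst Hin]. rewrite !cat_1; try lra.
    apply (proj2 Hh1 V HV). split; [exact Hst|]. intros z H1 H2.
    rewrite <- (@cat_1 S g1 g2 z); [|lra]. apply Hin; lra. }
  assert (P2 : forall s t, 1/2 <= proj1_sig s ->
            circ vI1 (fun z => V (pcat g1 g2 z)) s t -> circ S V (pcat g1 g2 s) (pcat g1 g2 t)).
  { intros s t Hs [Hst Hin]. rewrite !cat_2; auto; try lra.
    apply (proj2 Hh2 V HV). split; [exact Hst|]. intros z H1 H2.
    rewrite <- (@cat_2 S g1 g2 z J); [|lra]. apply Hin; lra. }
  intros s t Hc.
  destruct (Rle_dec (proj1_sig t) (1/2)); [apply P1; auto|].
  destruct (Rle_dec (1/2) (proj1_sig s)); [apply P2; auto|].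
  assert (Hh : 0 <= 1/2 <= 1) by lra.
  set (h := exist _ (1/2) Hh : unit_interval).
  destruct Hc as [Hst Hin].
  apply (proj2 (proj2 (proj1 (proj2 HS) V HV))) with (pcat g1 g2 h).
  + apply P1; [simpl; lra|]. split; [simpl; lra|]. intros z H1 H2; apply Hin; simpl in *; lra.
  + apply P2; [simpl; lra|]. split; [simpl; lra|]. intros z H1 H2; apply Hin; simpl in *; lra.
Qed.

Lemma cat_i0 (S : stream) (g1 g2 : vI1 -> S) : pcat g1 g2 i0 = g1 i0.
Proof.
rewrite cat_1; [|simpl; lra]. f_equal. apply ui_eq. simpl. apply clv_eq; simpl; lra.
Qed.

Lemma cat_i1 (S : stream) (g1 g2 : vI1 -> S) : g1 i1 = g2 i0 -> pcat g1 g2 i1 = g2 i1.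
Proof.
intros J. rewrite cat_2; auto; [|simpl; lra]. f_equal. apply ui_eq. simpl. apply clv_eq; simpl; lra.
Qed.

Lemma cat_in (S : stream) (g1 g2 : vI1 -> S) (V : S -> Prop) :
  (forall t, V (g1 t)) -> (forall t, V (g2 t)) -> forall t, V (pcat g1 g2 t).
Proof. intros H1 H2 t. unfold pcat. destruct (Rle_dec _ _); [apply H1|apply H2]. Qed.

Set Implicit Arguments.
Unset Strict Implicit.

Definition PP (S : stream) (V : S -> Prop) (x y : S) : Prop :=
  exists g : vI1 -> S, dipath g /\ g i0 = x /\ g i1 = y /\ forall t, V (g t).

Definition pstream (S : stream) : stream :=
  @Stream (carrier S) (isopen S) (fun V x y => circ S V x y /\ PP V x y).

Lemma PP_refl (S : stream) (V : S -> Prop) x : is_stream S -> V x -> PP V x x.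
Proof. intros HS Vx. exists (fun _ => x). split; [apply const_dipath; exact HS|]. auto. Qed.

Lemma PP_trans (S : stream) (V : S -> Prop) x y z : is_stream S -> PP V x y -> PP V y z -> PP V x z.
Proof.
intros HS [g1 [H1 [E10 [E11 I1]]]] [g2 [H2 [E20 [E21 I2]]]].
assert (J : g1 i1 = g2 i0) by congruence.
exists (pcat g1 g2). split; [apply cat_dipath; auto|].
split; [rewrite cat_i0; exact E10|]. split; [rewrite cat_i1; auto; congruence|].
apply cat_in; auto.
Qed.

Lemma PP_mono (S : stream) (V V' : S -> Prop) x y : (forall z, V z -> V' z) -> PP V x y -> PP V' x y.
Proof. intros H [g [Hg [E0 [E1 I]]]]. exists g. auto. Qed.

Lemma PP_sub (S : stream) (V : S -> Prop) (g : vI1 -> S) (s t : vI1) : dipath g ->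
  proj1_sig s <= proj1_sig t ->
  (forall w : vI1, proj1_sig s <= proj1_sig w -> proj1_sig w <= proj1_sig t -> V (g w)) ->
  PP V (g s) (g t).
Proof.
intros Hg Hst Hin.
exists (fun w => g (lin (proj1_sig s) (proj1_sig t) w)). split.
{ apply comp_sm; [apply lin_stream; exact Hst|exact Hg]. }
destruct s as [sv Hs], t as [tv Ht]. simpl in *.
split; [f_equal; apply ui_eq; simpl; apply clv_eq; simpl; lra|].
split; [f_equal; apply ui_eq; simpl; apply clv_eq; simpl; lra|].
intros [wv Hw]. apply Hin; simpl; rewrite clv_id; try nra.
Qed.

Lemma union_open (S : stream) (O : (S -> Prop) -> Prop) : is_stream S ->
  (forall V, O V -> isopen S V) -> isopen S (bigunion O).
Proof. intros HS HO. exact (proj1 (proj2 (proj1 HS)) O HO). Qed.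

Lemma pstream_stream (S : stream) : is_stream S -> is_stream (pstream S).
Proof.
intros HS. split; [exact (proj1 HS)|]. split.
- intros V HV. pose proof (proj1 (proj2 HS) V HV) as [P1 [P2 P3]]. split; [|split].
  + intros x y [H _]. exact (P1 x y H).
  + intros x Vx. split; [exact (P2 x Vx)|]. apply PP_refl; auto.
  + intros x y z [H1 H2] [H3 H4]. split; [exact (P3 x y z H1 H3)|]. eapply PP_trans; eauto.
- intros O HO x y. simpl. split.
  + intros [Hc [g [Hg [E0 [E1 Hin]]]]].
    set (Q := fun r => forall t : vI1, proj1_sig t = r ->
      @pclos (carrier S) (bigunion O) (fun a b => exists V, O V /\ circ S V a b /\ @PP S V a b) x (g t)).
    assert (HQ : Q 1).
    { apply (chain 0 1 Q); [lra| |].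
      - intros t Ht. assert (t = i0) by (apply ui_eq; exact Ht). subst t.
        rewrite E0. apply pclos_refl. rewrite <- E0. apply Hin.
      - intros z Hz.
        destruct (Hin (exist _ z Hz)) as [V [OV Vz]].
        destruct (proj1 Hg V (HO V OV)) as [W [HW HVW]].
        destruct (open_ball _ _ HW (proj1 (HVW _) Vz)) as [d [Hd Hball]].
        exists d. split; [exact Hd|].
        intros s t Hs Hst Ht Hs' Ht' Qs t' Ht'v.
        assert (Hs01 : 0 <= s <= 1) by lra.
        assert (Hloc : forall w : vI1, s <= proj1_sig w -> proj1_sig w <= proj1_sig t' -> V (g w)).
        { intros w H1 H2. apply HVW. apply Hball. simpl. rewrite Ht'v in H2.
          unfold Rabs; destruct (Rcase_abs _); lra. }
        apply pclos_trans with (g (exist _ s Hs01)).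
        + apply Qs. reflexivity.
        + apply pclos_step. exists V. split; [exact OV|]. split.
          * apply (proj2 Hg V (HO V OV)). split; [simpl; lra|]. intros w H1 H2. apply Hloc; simpl in *; lra.
          * apply PP_sub; [exact Hg|simpl; lra|]. intros w H1 H2. apply Hloc; simpl in *; lra. }
    rewrite <- E1. apply HQ. reflexivity.
  + intros H. induction H as [a Wa|a b [V [OV [Hab HPP]]]|a b c _ [IH1 IH1'] _ [IH2 IH2']].
    * split.
      -- exact (proj1 (proj2 (proj1 (proj2 HS) _ (union_open HS HO))) a Wa).
      -- apply PP_refl; auto.
    * split.
      -- apply (proj2 (proj2 (proj2 HS) O HO a b)). apply pclos_step. exists V. auto.
      -- eapply PP_mono; [|exact HPP]. intros z Vz. exists V. auto.
    * split.
      -- exact (proj2 (proj2 (proj1 (proj2 HS) _ (union_open HS HO))) a b c IH1 IH2).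
      -- eapply PP_trans; eauto.
Qed.

Set Implicit Arguments.
Unset Strict Implicit.

Definition pt : stream := @Stream unit (fun _ => True) (fun V x y => V x).

Lemma pt_stream : is_stream pt.
Proof.
split; [split; [exact I|split; intros; exact I]|]. split.
- intros V _. split; [|split].
  + intros [] [] H. auto.
  + intros x Vx. exact Vx.
  + intros x y z H _. exact H.
- intros O HO x y. simpl. split.
  + intros H. destruct x, y. apply pclos_refl. exact H.
  + intros H. refine (proj1 (@pclos_ends _ _ _ x y _ H)).
    intros [] [] [V [OV Va]]. split; exists V; auto.
Qed.

Lemma const_from_pt (S : stream) (c : S) : is_stream S -> is_stream_map (X:=pt) (Y:=S) (fun _ => c).
Proof.
intros HS. split.
- intros V _. exact I.
- intros V HV x y H. simpl in H. exact (proj1 (proj2 (proj1 (proj2 HS) V HV)) c H).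
Qed.

Lemma const_pt_vI1 (c : vI1) : is_stream_map (X:=pt) (Y:=vI1) (fun _ => c).
Proof. apply const_from_pt. exact vI1_stream. Qed.


Lemma joint_inj (n : nat) (P : stream) (pr : 'I_n -> P -> vI1) (HP : is_stream P) (Hprod : is_product_vI1 pr) (p q : P) : (forall i, pr i p = pr i q) -> p = q.
Proof.
intros H.
destruct (proj2 Hprod pt pt_stream (fun i _ => pr i p) (fun i => const_pt_vI1 (pr i p))) as [_ U].
exact (U (fun _ => p) (fun _ => q) (const_from_pt p HP) (const_from_pt q HP)
        (fun i z => erefl) (fun i z => esym (H i)) tt).
Qed.

Definition isopenQ (n : nat) (P : stream) (pr : 'I_n -> P -> vI1) (V : P -> Prop) : Prop :=
  forall x, V x -> exists U : 'I_n -> vI1 -> Prop, (forall i, isopen vI1 (U i)) /\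
     (forall i, U i (pr i x)) /\ (forall z, (forall i, U i (pr i z)) -> V z).

Definition Qs (n : nat) (P : stream) (pr : 'I_n -> P -> vI1) : stream := @Stream (carrier P) (isopenQ pr) (fun V x y => V x /\ x = y).

Lemma Qs_stream (n : nat) (P : stream) (pr : 'I_n -> P -> vI1) : is_stream (Qs pr).
Proof.
split; [split; [|split]|].
- intros x _. exists (fun _ _ => True). split; [intros; apply open_const|]. auto.
- intros O HO x [V [OV Vx]]. destruct (HO V OV x Vx) as [U [HU [Ux UV]]].
  exists U. split; [exact HU|]. split; [exact Ux|]. intros z Hz. exists V. auto.
- intros A B HA HB x [Ax Bx].
  destruct (HA x Ax) as [U1 [HU1 [U1x U1A]]]. destruct (HB x Bx) as [U2 [HU2 [U2x U2B]]].
  exists (fun i w => U1 i w /\ U2 i w). split; [intros i; apply (proj2 (proj2 vI1_topology)); auto|].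
  split; [intros i; auto|]. intros z Hz. split; [apply U1A|apply U2B]; intros i; apply Hz.
- split.
  + intros V _. split; [|split].
    * intros x y [Vx E1]. subst. auto.
    * intros x Vx. simpl. split; auto.
    * intros x y z [Vx E1] [_ E2]. subst. simpl. split; auto.
  + intros O HO x y. simpl. split.
    * intros [Vx E1]. subst. apply pclos_refl. exact Vx.
    * intros H. induction H as [a Wa|a b [V [OV [Va E1]]]|a b c _ [IH1 E1] _ [IH2 E2]]; subst; auto.
      split; [exists V; auto|auto].
Qed.

Lemma pr_Qs (n : nat) (P : stream) (pr : 'I_n -> P -> vI1) i : is_stream_map (X:=Qs pr) (Y:=vI1) (pr i).
Proof.
split.
- intros U HU x Ux. exists (fun j w => if j == i then U w else True). split.
  + intros j. destruct (j == i); [exact HU|apply open_const].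
  + split; [intros j; destruct (j == i) eqn:E; [move/eqP: E => ->; exact Ux|exact I]|].
    intros z Hz. pose proof (Hz i) as Hi. rewrite eqxx in Hi. exact Hi.
- intros V HV x y [Vx <-]. exact (proj1 (proj2 (vI1_preorder V)) _ Vx).
Qed.

Lemma P_open_Q (n : nat) (P : stream) (pr : 'I_n -> P -> vI1) (HP : is_stream P) (Hprod : is_product_vI1 pr) (V : P -> Prop) : isopen P V -> isopenQ pr V.
Proof.
intros HV.
destruct (proj2 Hprod (Qs pr) (Qs_stream pr) pr (pr_Qs pr)) as [[u [Hu Hpu]] _].
assert (Hid : forall z, u z = z) by (intros z; apply (joint_inj HP Hprod); intros i; apply Hpu).
pose proof (proj1 Hu V HV) as H. simpl in H.
assert (E : (fun x => V (u x)) = V) by (apply functional_extensionality; intros x; rewrite Hid; reflexivity).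
rewrite E in H. exact H.
Qed.

Lemma box_open (n : nat) (P : stream) (pr : 'I_n -> P -> vI1) (HP : is_stream P) (Hprod : is_product_vI1 pr) (U : 'I_n -> vI1 -> Prop) : (forall i, isopen vI1 (U i)) ->
  isopen P (fun z => forall i, U i (pr i z)).
Proof.
intros HU.
assert (L : forall l : seq 'I_n, isopen P (fun z => forall i, i \in l -> U i (pr i z))).
{ intros l. induction l as [|a l IH].
  - assert (E : (fun z : P => forall i : 'I_n, i \in [::] -> U i (pr i z)) = (fun _ => True)).
    { apply pred_ext. intros z. split; [auto|]. intros _ i. rewrite in_nil. discriminate. }
    rewrite E. exact (proj1 (proj1 HP)).
  - assert (E : (fun z : P => forall i : 'I_n, i \in a :: l -> U i (pr i z)) =
                (fun z => U a (pr a z) /\ (forall i, i \in l -> U i (pr i z)))).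
    { apply pred_ext. intros z. split.
      - intros H. split; [apply H; rewrite in_cons eqxx; reflexivity|].
        intros i Hi. apply H. rewrite in_cons Hi orbT. reflexivity.
      - intros [H1 H2] i. rewrite in_cons. case/orP.
        + move/eqP => ->. exact H1.
        + apply H2. }
    rewrite E. apply (proj2 (proj2 (proj1 HP))); [|exact IH].
    exact (proj1 (proj1 Hprod a) (U a) (HU a)). }
assert (E : (fun z : P => forall i, U i (pr i z)) = (fun z => forall i, i \in enum 'I_n -> U i (pr i z))).
{ apply pred_ext. intros z. split; auto. intros H i. apply H. rewrite mem_enum. reflexivity. }
rewrite E. apply L.
Qed.

Lemma circ_mono (S : stream) (V V' : S -> Prop) a b : is_stream S -> isopen S V -> isopen S V' ->
  (forall z, V z -> V' z) -> circ S V a b -> circ S V' a b.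
Proof.
intros HS HV HV' Hsub H.
set (O := fun W => W = V \/ W = V').
assert (HO : forall W, O W -> isopen S W) by (intros W [->| ->]; auto).
assert (E : bigunion O = V').
{ apply pred_ext. intros z. split.
  - intros [W [[->| ->] Wz]]; auto.
  - intros Hz. exists V'. split; [right; reflexivity|exact Hz]. }
rewrite <- E. apply (proj2 (proj2 (proj2 HS) O HO a b)). apply pclos_step. exists V. split; [left; reflexivity|exact H].
Qed.

Lemma lin_in a b t : 0 <= a -> a <= b -> b <= 1 -> a <= proj1_sig (lin a b t) <= b.
Proof.
intros Ha Hab Hb. destruct t as [tv Ht]. change (a <= clv (a + tv * (b - a)) <= b).
rewrite clv_id; nra.
Qed.

Lemma cube_po (n : nat) (P : stream) (pr : 'I_n -> P -> vI1) (HP : is_stream P) (Hprod : is_product_vI1 pr) : path_ordered P.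
Proof.
intros V HV x y Hc.
set (O := fun B : P -> Prop => exists U : 'I_n -> vI1 -> Prop, (forall i, isopen vI1 (U i)) /\
          B = (fun z => forall i, U i (pr i z)) /\ (forall z, B z -> V z)).
assert (HO : forall B, O B -> isopen P B) by (intros B [U [HU [-> _]]]; apply (box_open HP Hprod); exact HU).
assert (E : bigunion O = V).
{ apply pred_ext. intros z. split.
  - intros [B [[U [_ [_ HB]]] Bz]]. auto.
  - intros Vz. destruct (P_open_Q HP Hprod HV Vz) as [U [HU [Uz UV]]].
    exists (fun z => forall i, U i (pr i z)). split; [|exact Uz].
    exists U. auto. }
rewrite <- E in Hc. rewrite <- E.
apply (proj1 (proj2 (proj2 HP) O HO x y)) in Hc.
change (PP (bigunion O) x y).
induction Hc as [a Wa|a b [B [OB HB]]|a b c _ IH1 _ IH2].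
- apply PP_refl; auto.
- destruct OB as [U [HU [EB BV]]]. subst B.
  assert (Hi : forall i, circ vI1 (U i) (pr i a) (pr i b)).
  { intros i. apply (proj2 (proj1 Hprod i) (U i) (HU i)).
    apply (circ_mono (V:=fun z => forall i, U i (pr i z))); auto.
    - apply (box_open HP Hprod); exact HU.
    - exact (proj1 (proj1 Hprod i) _ (HU i)). }
  assert (Hle : forall i, proj1_sig (pr i a) <= proj1_sig (pr i b)) by (intros i; apply (Hi i)).
  destruct (proj1 (proj2 Hprod vI1 vI1_stream (fun i => lin (proj1_sig (pr i a)) (proj1_sig (pr i b)))
                (fun i => lin_stream _ _ (Hle i)))) as [g [Hg Hpg]].
  exists g. split; [exact Hg|]. split; [|split].
  + apply (joint_inj HP Hprod). intros i. rewrite Hpg. apply ui_eq.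
    change (clv (proj1_sig (pr i a) + 0 * (proj1_sig (pr i b) - proj1_sig (pr i a))) = proj1_sig (pr i a)).
    destruct (pr i a) as [av Ha]. apply clv_eq; simpl; lra.
  + apply (joint_inj HP Hprod). intros i. rewrite Hpg. apply ui_eq.
    change (clv (proj1_sig (pr i a) + 1 * (proj1_sig (pr i b) - proj1_sig (pr i a))) = proj1_sig (pr i b)).
    destruct (pr i b) as [bv Hb]. apply clv_eq; simpl; lra.
  + intros t. exists (fun z => forall i, U i (pr i z)). split.
    * exists U. auto.
    * intros i. rewrite Hpg. apply (proj2 (Hi i)); apply lin_in; auto;
        [destruct (pr i a) as [? ?]; simpl; lra|destruct (pr i b) as [? ?]; simpl; lra
        |destruct (pr i a) as [? ?]; simpl; lra|destruct (pr i b) as [? ?]; simpl; lra].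
- eapply PP_trans; eauto.
Qed.


Set Implicit Arguments.
Unset Strict Implicit.

Lemma to_p (X S : stream) (f : X -> S) : is_stream S -> path_ordered X -> is_stream_map f ->
  is_stream_map (X:=X) (Y:=pstream S) f.
Proof.
intros HS HX [Hf1 Hf2]. split.
- intros V HV. exact (Hf1 V HV).
- intros V HV x y H. split; [exact (Hf2 V HV x y H)|].
  destruct (HX _ (Hf1 V HV) x y H) as [g [Hg [E0 [E1 Hin]]]].
  exists (fun t => f (g t)). split; [apply comp_sm; auto; split; auto|].
  split; [rewrite E0; reflexivity|]. split; [rewrite E1; reflexivity|]. exact Hin.
Qed.

Lemma id_to (S : stream) : is_stream_map (X:=pstream S) (Y:=S) (fun x => x).
Proof. split; [intros V HV; exact HV|intros V HV x y [H _]; exact H]. Qed.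

Lemma id_sm (S : stream) : is_stream_map (X:=S) (Y:=S) (fun x => x).
Proof. split; [intros V HV; exact HV|intros V HV x y H; exact H]. Qed.

Unset Implicit Arguments.
Set Strict Implicit.
Theorem mainTheorem9
  (X : precubical)
  (Cube : nat -> stream) (pr : forall n, 'I_n -> Cube n -> vI1)
  (cmap : forall m n (f : bcube m -> bcube n), box_mor f -> Cube m -> Cube n)
  (HCube : forall n, is_stream (Cube n))
  (Hprod : forall n, is_product_vI1 (pr n))
  (Hcmap : linear_cube_maps pr cmap)
  (Real : stream) (iota : forall m, X m -> Cube m -> Real)
  (HReal : is_stream Real)
  (Hcoend : is_coend cmap iota) :
  path_ordered Real.
Proof.
assert (Hpo : forall m, path_ordered (Cube m)).
{ intros m. exact (cube_po (HCube m) (Hprod m)). }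
destruct Hcoend as [[Hw1 Hw2] Hu].
assert (Hwz : is_wedge (Y:=pstream Real) cmap (fun m x t => iota m x t)).
{ split.
  - intros m x. apply to_p; auto.
  - intros m n f hf x t. apply Hw2. }
destruct (Hu (pstream Real) (pstream_stream HReal) _ Hwz) as [[u [Hus Hui]] _].
pose proof (comp_sm Hus (id_to Real)) as Hw.
assert (Hid : forall y, u y = y).
{ intros y. apply (proj2 (Hu Real HReal iota (conj Hw1 Hw2)) (fun y => u y) (fun y => y) Hw (id_sm Real));
    intros; auto. }
intros V HV x y H.
pose proof (proj2 Hus V HV x y) as H'.
assert (E : (fun z => V (u z)) = V) by (apply functional_extensionality; intros z; rewrite Hid; reflexivity).
simpl in H'. rewrite E in H'. destruct (H' H) as [_ HPP].
rewrite !Hid in HPP. exact HPP.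
Qed.
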